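(* Let $p_1,p_2>2$ be distinct primes, let $m_1=p_1^{\alpha_1}p_2^{\alpha_2}$ and $m_2=p_1^{\beta_1}p_2^{\beta_2}$ with $\alpha_1,\alpha_2,\beta_1,\beta_2$ positive integers. If $m_1$ is good and $m_1\mid m_2$, then $m_2$ is good.
   Context: For $m=p_1^{\alpha_1}p_2^{\alpha_2}$ with $p_1,p_2>2$ distinct primes and $\alpha_1,\alpha_2\ge1$: let $t=\mathrm{ord}_m(2)$ (the multiplicative order of $2$ modulo $m$) and let $\gamma\in\mathbb{F}_{2^t}^*$ be a primitive $m$th root of unity. The canonical set of $m$ is $S_m=\{s_{01},s_{10},s_{11}\}\subseteq\mathbb{Z}_m$, where for $\sigma=(\sigma_1,\sigma_2)\in\{0,1\}^2\setminus\{(0,0)\}$, $s_\sigma$ is the unique element of $\mathbb{Z}_m$ with $s_\sigma\equiv\sigma_1 \pmod{p_1^{\alpha_1}}$ and $s_\sigma\equiv \sigma_2\pmod{p_2^{\alpha_2}}$. An $S_m$-decoding polynomial is a polynomial $P(X)\in\mathbb{F}_{2^t}[X]$ such that $P(\gamma^s)=0$ for every $s\in S_m$ and $P(1)=1$. The number $m$ is called good if there exists an $S_m$-decoding polynomial with fewer than $4$ monomials (nonzero terms). *)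

(* Defs.v *)
From HB Require Import structures.
From mathcomp Require Import all_boot all_order all_algebra all_field.
Set Implicit Arguments. Unset Strict Implicit. Unset Printing Implicit Defensive.
Import GRing.Theory.
Local Open Scope ring_scope.

Definition is_ord2 (m t : nat) : Prop :=
  [/\ (0 < t)%N, (2 ^ t = 1 %[mod m])%N
    & forall k : nat, (0 < k)%N -> (2 ^ k = 1 %[mod m])%N -> (t <= k)%N].

(* Membership in the canonical set S_m of m = q1 * q2 (q1 = p1^a1, q2 = p2^a2):
   s in Z_m (represented by 0 <= s < m) with s = s_sigma for some
   sigma in {0,1}^2 \ {(0,0)}, i.e. s mod q1 = sigma_1, s mod q2 = sigma_2. *)
Definition in_canonical_set (q1 q2 s : nat) : bool :=
  ((s < q1 * q2) &&
     [|| (s %% q1 == 0) && (s %% q2 == 1),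
         (s %% q1 == 1) && (s %% q2 == 0)
       | (s %% q1 == 1) && (s %% q2 == 1)])%N.

Definition decoding_poly (F : fieldType) (q1 q2 : nat) (gamma : F)
    (P : {poly F}) : Prop :=
  P.[1] = 1 /\ forall s : nat, in_canonical_set q1 q2 s -> P.[gamma ^+ s] = 0.

Definition nmonomials (F : fieldType) (P : {poly F}) : nat :=
  count (fun c => c != 0) P.

(* m = p1^a1 * p2^a2 is good: for t = ord_m(2), the field F_{2^t} (any finite
   field with 2^t elements) and any primitive m-th root of unity gamma in it,
   there is an S_m-decoding polynomial with fewer than 4 monomials. *)
Definition good (p1 a1 p2 a2 : nat) : Prop :=
  let q1 := (p1 ^ a1)%N in let q2 := (p2 ^ a2)%N in let m := (q1 * q2)%N in
  forall t : nat, is_ord2 m t ->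
  forall (F : finFieldType) (gamma : F),
    #|F| = (2 ^ t)%N -> m.-primitive_root gamma ->
    exists P : {poly F}, decoding_poly q1 q2 gamma P /\ (nmonomials P < 4)%N.

(* Main.v *)
Require Import Defs.
From HB Require Import structures.
From mathcomp Require Import all_boot all_order all_algebra all_field all_solvable.
From mathcomp Require Import zify.
Set Implicit Arguments. Unset Strict Implicit. Unset Printing Implicit Defensive.
Import GRing.Theory.
Local Open Scope ring_scope.

Lemma ord2_exists m : (0 < m)%N -> coprime 2 m -> exists t, is_ord2 m t.
Proof.
move=> m0 cm.
have Ht : exists k, (0 < k)%N && (2 ^ k %% m == 1 %% m)%N.
  by exists (totient m); rewrite totient_gt0 m0; apply/eqP/Euler_exp_totient.
case: (ex_minnP Ht) => t /andP[t0 /eqP Ht1] Hmin.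
exists t; split => // k k0 Hk; apply: Hmin; by rewrite k0 Hk eqxx.
Qed.

Lemma pow_mod1 m t q : (2 ^ t = 1 %[mod m])%N -> (2 ^ (t * q) = 1 %[mod m])%N.
Proof.
move=> H; rewrite expnM -modnXm H modnXm exp1n //.
Qed.

Lemma ord2_dvd m t k : is_ord2 m t -> (0 < k)%N -> (2 ^ k = 1 %[mod m])%N -> (t %| k)%N.
Proof.
case=> t0 Ht Hmin k0 Hk.
have Hr : (2 ^ (k %% t) = 1 %[mod m])%N.
  have E : (2 ^ (k %/ t * t) = 1 %[mod m])%N by rewrite mulnC pow_mod1.
  by move: Hk; rewrite {1}(divn_eq k t) expnD -modnMml E modnMml mul1n.
rewrite /dvdn; case: (posnP (k %% t)) => [//|r0].
by have := Hmin _ r0 Hr; rewrite leqNgt ltn_pmod.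
Qed.
Definition nzc (F : fieldType) (p : {poly F}) (i : nat) : nat := p`_i != 0.

Lemma sum_ext0 (f : nat -> nat) a b : (a <= b)%N -> (forall i, (a <= i)%N -> f i = 0%N) ->
  (\sum_(0 <= i < b) f i = \sum_(0 <= i < a) f i)%N.
Proof.
move=> ab H; rewrite (@big_cat_nat _ _ _ a 0 b _ _ (leq0n a) ab) /= [X in (_ + X)%N]big1_seq ?addn0 //.
by move=> i /andP[_]; rewrite mem_index_iota => /andP[ai _]; exact: H.
Qed.

Lemma nm_sum (F : fieldType) (p : {poly F}) n : (forall i, (n <= i)%N -> p`_i = 0) ->
  nmonomials p = (\sum_(0 <= i < n) nzc p i)%N.
Proof.
move=> Hn; rewrite /nmonomials -sum1_count (big_nth 0) big_mkcond /=.
have Hs : forall i, (size p <= i)%N -> p`_i = 0 by move=> i; exact: nth_default.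
rewrite -(@sum_ext0 _ (size p) (maxn n (size p))) ?leq_maxr //; last first.
  by move=> i /Hs ->; rewrite eqxx.
rewrite -(@sum_ext0 (nzc p) n (maxn n (size p))) ?leq_maxl //; last first.
  by move=> i /Hn; rewrite /nzc => ->; rewrite eqxx.
Qed.

Lemma nm_comp (F : fieldType) (p : {poly F}) d : (0 < d)%N ->
  nmonomials (p \Po 'X^d) = nmonomials p.
Proof.
move=> d0.
rewrite (@nm_sum _ _ (size p * d)); last first.
  move=> i Hi; rewrite coef_comp_poly_Xn //; case: ifP => // _.
  apply: nth_default; rewrite -(mulnK (size p) d0); exact: leq_div2r.
rewrite (@nm_sum _ p (size p)); last by move=> i; exact: nth_default.
elim: (size p) => [|k IH]; first by rewrite mul0n !big_geq.
rewrite mulSnr (@big_cat_nat _ _ _ (k * d) 0 (k * d + d) _ _ (leq0n (k * d)) (leq_addr d _)) /= IH big_nat_recr //=.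
congr (_ + _)%N.
rewrite big_ltn; last by rewrite -addn1 leq_add2l.
rewrite {1}/nzc coef_comp_poly_Xn // dvdn_mull // mulnK // big1_seq ?addn0 //.
move=> i /andP[_]; rewrite mem_index_iota => /andP[Hi1 Hi2].
rewrite /nzc coef_comp_poly_Xn //; case: (boolP (d %| i)%N) => [/dvdnP[j Hj]|_]; last by rewrite eqxx.
exfalso.
move: Hi1 Hi2; rewrite Hj -mulSnr ltn_pmul2r // ltn_pmul2r // => Hkj.
by rewrite ltnS leqNgt Hkj.
Qed.

Lemma nm_map (K F : fieldType) (f : {rmorphism K -> F}) (p : {poly K}) :
  nmonomials (map_poly f p) = nmonomials p.
Proof.
rewrite (@nm_sum _ _ (size p)); last first.
  by move=> i Hi; rewrite coef_map nth_default // raddf0.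
rewrite [RHS](@nm_sum K p (size p)); last by move=> i; exact: nth_default.
by apply: eq_bigr => i _; rewrite /nzc coef_map fmorph_eq0.
Qed.

Lemma size_XnX (F : fieldType) u : (1 < u)%N -> size ('X^u - 'X : {poly F}) = u.+1.
Proof.
by move=> u1; rewrite size_polyDl size_polyXn // size_polyN size_polyX.
Qed.

Lemma roots_le (F : finFieldType) (p : {poly F}) : p != 0 ->
  (#|[set x | root p x]| <= (size p).-1)%N.
Proof.
move=> p0; have := max_poly_roots p0 (rs := enum [set x | root p x]).
rewrite enum_uniq -cardE => H; rewrite -ltnS (leq_trans (H _ _)) //.
  by apply/allP => x; rewrite mem_enum inE.
by case: (size p).
Qed.

Lemma XnX_factor (F : fieldType) u U : (1 < u)%N -> (u <= U)%N -> ((u - 1) %| (U - 1))%N ->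
  exists g : {poly F}, 'X^U - 'X = ('X^u - 'X) * g.
Proof.
move=> u1 uU /dvdnP[k Hk].
exists (\sum_(i < k) ('X^(u - 1)) ^+ (k.-1 - i) * 1 ^+ i).
have EU : U = ((u - 1) * k).+1 by rewrite mulnC -Hk; lia.
have Eu : u = (u - 1).+1 by lia.
have E1 : forall n, 'X^(n.+1) - 'X = 'X * ('X^n - 1) :> {poly F}.
  by move=> n; rewrite exprS mulrBr mulr1.
rewrite EU {2}Eu !E1 -mulrA; congr (_ * _).
by rewrite -subrXX expr1n exprM.
Qed.
Definition fixK (F : finFieldType) (n : nat) : {pred F} :=
  fun x => if (2%:R == 0 :> F) then x ^+ (2 ^ n) == x else true.

Lemma pchar2_nat (F : finFieldType) n : 2%:R == 0 :> F -> [pchar F].-nat (2 ^ n)%N.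
Proof.
move=> H; rewrite pnatX; apply/orP; left.
by rewrite pnatE //= inE /= H.
Qed.

Lemma fixK_closed (F : finFieldType) n : divring_closed (@fixK F n).
Proof.
rewrite /fixK; case H2: (2%:R == 0 :> F); last first.
  by split => // *; rewrite ?inE.
split.
- by rewrite -topredE /= expr1n.
- move=> u v; rewrite -!topredE /= => /eqP Hu /eqP Hv.
  have Hn1 : (-1 : F) = 1.
    by apply/eqP; rewrite -subr_eq0 -opprD oppr_eq0; exact: H2.
  rewrite -mulN1r Hn1 mul1r.
  by rewrite exprDn_pchar ?pchar2_nat // Hu Hv.
- move=> u v; rewrite -!topredE /= => /eqP Hu /eqP Hv.
  by rewrite exprMn exprVn Hu Hv.
Qed.

HB.instance Definition _ (F : finFieldType) n :=
  GRing.isDivringClosed.Build F (@fixK F n) (@fixK_closed F n).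

Record KT (F : finFieldType) (n : nat) := MkK { kval :> F; kvalP : kval \in @fixK F n }.

HB.instance Definition _ F n := [isSub for (@kval F n)].
HB.instance Definition _ F n := [Countable of KT F n by <:].
HB.instance Definition _ F n := [Finite of KT F n by <:].
HB.instance Definition _ F n := [SubChoice_isSubIntegralDomain of KT F n by <:].
HB.instance Definition _ F n := [SubIntegralDomain_isSubField of KT F n by <:].


Lemma dvd_sub1 u q : (0 < u)%N -> ((u - 1) %| (u ^ q - 1))%N.
Proof.
move=> u0; rewrite -eqn_mod_dvd ?expn_gt0 ?u0 //; apply/eqP.
by rewrite -modnXm -{1}(subnK u0) modnDl modnXm exp1n.
Qed.

Lemma card_KT (F : finFieldType) t1 t2 : (0 < t1)%N -> (t1 %| t2)%N ->
  #|F| = (2 ^ t2)%N -> #|(KT F t1 : finFieldType)| = (2 ^ t1)%N.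
Proof.
move=> t10 dv HF.
have c2 : (2%:R == 0 :> F).
  by have := card_finPcharP HF (erefl : prime 2); rewrite inE => /andP[_ ->].
have F1 := @finNzRing_gt1 F.
have t20 : (0 < t2)%N by rewrite lt0n; apply/eqP => t0; move: F1; rewrite HF t0.
set u := (2 ^ t1)%N; set U := (2 ^ t2)%N.
have u1 : (1 < u)%N by rewrite /u -{1}(expn0 2) ltn_exp2l.
have U1 : (1 < U)%N by rewrite /U -{1}(expn0 2) ltn_exp2l.
have uU : (u <= U)%N by rewrite leq_pexp2l // dvdn_leq.
have Hk : ((u - 1) %| (U - 1))%N.
  by case/dvdnP: dv => q Hq; rewrite /U Hq mulnC expnM dvd_sub1 // expn_gt0.
rewrite card_sub.
have -> : #|[pred x | x \in @fixK F t1]| = #|[set x : F | root ('X^u - 'X) x]|.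
  apply: eq_card => x; rewrite !inE -topredE /= /fixK c2.
  by rewrite /root !hornerE subr_eq0.
have p0 : ('X^u - 'X : {poly F}) != 0 by rewrite -size_poly_eq0 size_XnX.
apply/eqP; rewrite eqn_leq; apply/andP; split.
  by have := roots_le p0; rewrite size_XnX.
have [g Hg] := XnX_factor F u1 uU Hk.
have P0 : ('X^U - 'X : {poly F}) != 0 by rewrite -size_poly_eq0 size_XnX.
have g0 : g != 0 by apply: contraNneq P0 => g0; rewrite Hg g0 mulr0.
have Sg := size_mul p0 g0; rewrite -Hg !size_XnX // in Sg.
have Hg2 := roots_le g0.
have Hsub : [set: F] \subset [set x | root ('X^u - 'X) x] :|: [set x | root g x].
  apply/subsetP => x _; rewrite !inE -rootM -Hg /root !hornerE.
  by rewrite /U -HF expf_card subrr.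
have := subset_leq_card Hsub; rewrite cardsT HF cardsU => H.
move: H Hg2 Sg; rewrite -/U.
set a := #|[set x | root ('X^u - 'X) x]|; set b := #|[set x | root g x]|.
set c := #|_ :&: _|; set s := size g.
lia.
Qed.

Lemma canon_mod q1 q2 Q1 Q2 s : (1 < q1)%N -> (1 < q2)%N -> (q1 %| Q1)%N -> (q2 %| Q2)%N ->
  in_canonical_set Q1 Q2 s -> in_canonical_set q1 q2 (s %% (q1 * q2)).
Proof.
move=> q11 q21 d1 d2; rewrite /in_canonical_set => /andP[_ H].
rewrite ltn_pmod ?muln_gt0 ?(ltnW q11) ?(ltnW q21) //=.
have E1 : (s %% (q1 * q2) %% q1 = s %% Q1 %% q1)%N by rewrite !modn_dvdm // dvdn_mulr.
have E2 : (s %% (q1 * q2) %% q2 = s %% Q2 %% q2)%N by rewrite !modn_dvdm // dvdn_mull.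
rewrite E1 E2.
case/or3P: H => /andP[/eqP -> /eqP ->]; rewrite ?mod0n ?modn_small ?eqxx ?orbT //.
Qed.

Lemma coprime2 p : prime p -> (2 < p)%N -> coprime 2 p.
Proof. by move=> pp p2; rewrite prime_coprime // dvdn_prime2 // ltn_eqF. Qed.

Theorem theorem3 (p1 p2 a1 a2 b1 b2 : nat) :
  prime p1 -> prime p2 -> (2 < p1)%N -> (2 < p2)%N -> p1 != p2 ->
  (0 < a1)%N -> (0 < a2)%N -> (0 < b1)%N -> (0 < b2)%N ->
  good p1 a1 p2 a2 ->
  (p1 ^ a1 * p2 ^ a2 %| p1 ^ b1 * p2 ^ b2)%N ->
  good p1 b1 p2 b2.
Proof.
move=> pp1 pp2 p1g p2g p12 a10 a20 b10 b20 Hgood Hdiv.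
rewrite /good => t2 Hord2 F gamma HF Hprim.
have p10 := prime_gt0 pp1; have p20 := prime_gt0 pp2.
have cp12 : coprime p1 p2 by rewrite prime_coprime // dvdn_prime2.
have cop : coprime 2 (p1 ^ a1 * p2 ^ a2).
  by rewrite coprimeMr !coprime_pexpr // !coprime2.
have m10 : (0 < p1 ^ a1 * p2 ^ a2)%N by rewrite muln_gt0 !expn_gt0 p10 p20.
have m20 : (0 < p1 ^ b1 * p2 ^ b2)%N by rewrite muln_gt0 !expn_gt0 p10 p20.
have [t1 Hord1] := ord2_exists m10 cop.
case: (Hord2) => t20 H2m _.
have Ht2m1 : (2 ^ t2 = 1 %[mod p1 ^ a1 * p2 ^ a2])%N.
  by rewrite -(modn_dvdm _ Hdiv) H2m modn_dvdm.
have dv := ord2_dvd Hord1 t20 Ht2m1.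
case: (Hord1) => t10 H1m _.
have HK := card_KT t10 dv HF.
have c2 : (2%:R == 0 :> F).
  by have := card_finPcharP HF (erefl : prime 2); rewrite inE => /andP[_ ->].
set m1 := (p1 ^ a1 * p2 ^ a2)%N in m10 cop Hord1 Ht2m1 H1m HK Hdiv.
set m2 := (p1 ^ b1 * p2 ^ b2)%N in Hprim Hdiv m20.
set d := (m2 %/ m1)%N.
have d0 : (0 < d)%N by rewrite divn_gt0 // dvdn_leq.
have Hprim1 : m1.-primitive_root (gamma ^+ d) := dvdn_prim_root Hprim Hdiv.
have Hdel : gamma ^+ d \in @fixK F t1.
  rewrite -topredE /= /fixK c2; apply/eqP.
  have E := expr_mod (2 ^ t1) (prim_expr_order Hprim1).
  have E' := expr_mod 1 (prim_expr_order Hprim1).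
  by rewrite -E H1m E' expr1.
pose delta : KT F t1 := MkK Hdel.
have Hprimd : m1.-primitive_root delta.
  by rewrite -(fmorph_primitive_root val).
have [P [[HP1 HPs] Hcnt]] := Hgood t1 Hord1 (KT F t1 : finFieldType) delta HK Hprimd.
have Hv : forall x, (map_poly val P).[val x] = val P.[x] by move=> x; exact: horner_map.
exists ((map_poly val P) \Po 'X^d).
split; [split|].
- rewrite horner_comp hornerXn expr1n; have := Hv 1; rewrite HP1 !rmorph1 => ->.
  by [].
- move=> s Hs; rewrite horner_comp hornerXn -exprM mulnC exprM.
  have -> : (gamma ^+ d) ^+ s = val (delta ^+ s) by rewrite rmorphXn.
  rewrite Hv -(expr_mod s (prim_expr_order Hprimd)) HPs ?raddf0 //.
  have q1d : (p1 ^ a1 %| p1 ^ b1)%N.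
    have := dvdn_trans (dvdn_mulr (p2 ^ a2) (dvdnn (p1 ^ a1))) Hdiv.
    by rewrite Gauss_dvdl // coprime_pexpl // coprime_pexpr.
  have q2d : (p2 ^ a2 %| p2 ^ b2)%N.
    have := dvdn_trans (dvdn_mull (p1 ^ a1) (dvdnn (p2 ^ a2))) Hdiv.
    by rewrite Gauss_dvdr // coprime_pexpl // coprime_pexpr // coprime_sym.
  apply: canon_mod Hs => //.
    by rewrite -{1}(expn0 p1) ltn_exp2l // (ltn_trans _ p1g).
  by rewrite -{1}(expn0 p2) ltn_exp2l // (ltn_trans _ p2g).
- by rewrite nm_comp // nm_map.
Qed.
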